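(* Let $I,S:\mathbb{R}\to\mathbb{R}$ be $2\pi$-periodic Lipschitz functions with $I\ge0$ and $\min_{\theta\in[-\pi,\pi]}I(\theta)S(\theta)<0<\max_{\theta\in[-\pi,\pi]}I(\theta)S(\theta)$. Let $(\theta_i(t))$ solve $\dot\theta_i=\omega_i+\frac{\kappa}{N}\sum_{j=1}^NI(\theta_j)S(\theta_i)$, $\theta_i(0)=\theta_i^0$. Fix $\mathcal B\subset\{1,\dots,N\}$ and let $\|\Omega_{\mathcal B}\|_\infty=\max_{i\in\mathcal B}|\omega_i|$. If \[ \kappa>\frac{N\|\Omega_{\mathcal B}\|_\infty}{\min\{-\min IS,\max IS\}}, \] then $\sup_{t\ge0}\theta_i(t)-\inf_{t\ge0}\theta_i(t)<2\pi$ for all $i\in\mathcal B$. *)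

(* Defs.v *)
From HB Require Import structures.
From mathcomp Require Import all_boot all_order all_algebra.
From mathcomp Require Import all_classical all_reals all_analysis.
Set Implicit Arguments. Unset Strict Implicit. Unset Printing Implicit Defensive.
Import Order.TTheory GRing.Theory Num.Theory.
Import numFieldNormedType.Exports.
Local Open Scope classical_set_scope.
Local Open Scope ring_scope.

Definition periodic2pi (R : realType) (f : R -> R) : Prop :=
  forall x, f (x + 2 * pi) = f x.

(* min_{[-pi,pi]} I S  and  max_{[-pi,pi]} I S  (I S continuous, so the
   inf/sup are attained and equal min/max) *)
Definition minIS (R : realType) (I S : R -> R) : R :=
  inf [set I x * S x | x in `[- pi, pi]].
Definition maxIS (R : realType) (I S : R -> R) : R :=
  sup [set I x * S x | x in `[- pi, pi]].

(* ||Omega_B||_oo = max_{i in B} |omega_i|  (0 for empty B) *)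
Definition normOmegaB (R : realType) (N : nat) (omega : 'I_N -> R)
  (B : {set 'I_N}) : R := \big[Num.max/0]_(i in B) `|omega i|.

Definition trajE (R : realType) (f : R -> R) : set (\bar R) :=
  [set (f t)%:E | t in `[0, +oo[].

(* Main.v *)
Require Import Defs.
From HB Require Import structures.
From mathcomp Require Import all_boot all_order all_algebra.
From mathcomp Require Import all_classical all_reals all_analysis.
From mathcomp Require Import lra ring.
Import Order.TTheory GRing.Theory Num.Theory.
Import numFieldNormedType.Exports.
Local Open Scope classical_set_scope.
Local Open Scope ring_scope.
Set Implicit Arguments. Unset Strict Implicit. Unset Printing Implicit Defensive.

Lemma lip_bound (R : realType) (f : R -> R) : lipschitz f ->
  exists2 M : R, 0 < M & forall x y, `|f x - f y| <= M * `|x - y|.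
Proof.
move=> /pinfty_ex_gt0 [M M0 HM]; exists M => // x y.
exact: (HM (x, y)).
Qed.

Lemma lip_cont (R : realType) (f : R -> R) : lipschitz f -> continuous f.
Proof.
move=> /lip_bound [M M0 HM] x; apply/cvgrPdist_lt => e e0.
apply/nbhs_ballP; exists (e / M); first by rewrite /= divr_gt0.
move=> y; rewrite /ball /= => hy.
apply: (le_lt_trans (HM x y)); by rewrite -ltr_pdivlMl // mulrC.
Qed.

Lemma near_pos (R : realType) (g : R -> R) (x c : R) : continuous g -> c < g x ->
  exists2 r : R, 0 < r & forall y, `|x - y| < r -> c < g y.
Proof.
move=> cg cx; have := cg x; move/cvgrPdist_lt => /(_ (g x - c)); rewrite subr_gt0 => /(_ cx).
move/nbhs_ballP => [r r0 H]; exists r => // y hy.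
have := H y hy; rewrite /= ltr_norml => /andP[h1 h2]; lra.
Qed.

Lemma cont_ball (R : realType) (f : R -> R) (u e : R) :
  {within `[0, +oo[, continuous f} -> 0 <= u -> 0 < e ->
  exists2 d : R, 0 < d & forall r, 0 <= r -> `|u - r| < d -> `|f u - f r| < e.
Proof.
move=> /subspace_continuousP cf u0 e0.
have Au : `[0, +oo[%classic u by rewrite /= in_itv /= u0.
have := cf u Au; move/cvgrPdist_lt => /(_ e e0).
rewrite near_withinE => /nbhs_ballP [d d0 H]; exists d => // r r0 hr.
apply: (H r hr); by rewrite /= in_itv /= r0.
Qed.

Lemma barrier_down (R : realType) (f : R -> R) (p rho : R) : 0 < rho ->
  {within `[0, +oo[, continuous f} ->
  (forall r, 0 < r -> derivable f r 1) ->
  (forall r, 0 < r -> `|f r - p| < rho -> derive1 f r < 0) ->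
  forall s t, 0 <= s -> s <= t -> f s <= p -> f t <= p.
Proof.
move=> rho0 cf df dpos s t s0 st ps; rewrite leNgt; apply/negP => ftp.
pose A := [set r | s <= r <= t /\ f r <= p].
have As : A s by split => //; rewrite lexx st.
have hub : has_ubound A by exists t => r [/andP[_ ->]].
have hsup : has_sup A by split => //; exists s.
set u := sup A.
have su : s <= u := ub_le_sup hub As.
have ut : u <= t by apply: ge_sup; [exists s| move=> r [/andP[_ ->]]].
have u0 : 0 <= u by apply: le_trans su.
have pu : f u <= p.
  rewrite leNgt; apply/negP => fup.
  have pe : 0 < f u - p by rewrite subr_gt0.
  have [d d0 H] := cont_ball cf u0 pe.
  have [a Aa ua] := sup_adherent d0 hsup; rewrite -/u in ua.
  have au : a <= u := ub_le_sup hub Aa.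
  case: Aa => /andP[sa _] pa.
  have hd : `|u - a| < d by rewrite ger0_norm ?subr_ge0 //; lra.
  have := H a (le_trans s0 sa) hd.
  rewrite ltr_norml => /andP[h1 h2]; lra.
have after : forall r, u < r -> r <= t -> p < f r.
  move=> r ur rt; rewrite ltNge; apply/negP => pr.
  have : r <= u.
    apply: (ub_le_sup hub); split => //; rewrite rt andbT; apply: le_trans su (ltW ur).
  lra.
have ut' : u < t.
  rewrite lt_neqAle ut andbT; apply/negP => /eqP eut.
  by move: ftp; rewrite -eut ltNge pu.
have [d d0 H] := cont_ball cf u0 rho0.
pose b := Num.min t (u + d / 2).
have ub : u < b by rewrite /b lt_min ut' /=; lra.
have bt : b <= t by rewrite /b ge_min lexx.
have bud : b <= u + d / 2 by rewrite /b ge_min lexx orbT.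
have hder : forall x, x \in `]u, b[ -> is_derive x 1 f (derive1 f x).
  move=> x; rewrite in_itv /= => /andP[ux _].
  rewrite derive1E; apply: derivableP; apply: df; lra.
have hcont : {within `[u, b], continuous f}.
  apply: (continuous_subspaceW _ cf) => x /=; rewrite !in_itv /= => /andP[ux _].
  rewrite andbT; lra.
have [c] := MVT ub hder hcont.
rewrite in_itv /= => /andP[uc cb] eq.
have fcp : p < f c by apply: after => //; lra.
have c0 : 0 <= c by lra.
have hd : `|u - c| < d by rewrite ler0_norm ?subr_le0; lra.
have := H c c0 hd.
rewrite ltr_norml => /andP[h1 h2].
have c0' : 0 < c by lra.
have hr : `|f c - p| < rho by rewrite ger0_norm ?subr_ge0; lra.
have dc := dpos c c0' hr.
have : 0 < - derive1 f c * (b - u) by rewrite mulr_gt0 // ?oppr_gt0 ?subr_gt0.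
rewrite mulNr -eq.
have := after b ub bt. lra.
Qed.

Lemma barrier_up (R : realType) (f : R -> R) (p rho : R) : 0 < rho ->
  {within `[0, +oo[, continuous f} ->
  (forall r, 0 < r -> derivable f r 1) ->
  (forall r, 0 < r -> `|f r - p| < rho -> 0 < derive1 f r) ->
  forall s t, 0 <= s -> s <= t -> p <= f s -> p <= f t.
Proof.
move=> rho0 cf df dpos s t s0 st ps; rewrite leNgt; apply/negP => ftp.
pose A := [set r | s <= r <= t /\ p <= f r].
have As : A s by split => //; rewrite lexx st.
have hub : has_ubound A by exists t => r [/andP[_ ->]].
have hsup : has_sup A by split => //; exists s.
set u := sup A.
have su : s <= u := ub_le_sup hub As.
have ut : u <= t by apply: ge_sup; [exists s| move=> r [/andP[_ ->]]].
have u0 : 0 <= u by apply: le_trans su.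
have pu : p <= f u.
  rewrite leNgt; apply/negP => fup.
  have pe : 0 < p - f u by rewrite subr_gt0.
  have [d d0 H] := cont_ball cf u0 pe.
  have [a Aa ua] := sup_adherent d0 hsup; rewrite -/u in ua.
  have au : a <= u := ub_le_sup hub Aa.
  case: Aa => /andP[sa _] pa.
  have hd : `|u - a| < d by rewrite ger0_norm ?subr_ge0 //; lra.
  have := H a (le_trans s0 sa) hd.
  rewrite ltr_norml => /andP[h1 h2]; lra.
have after : forall r, u < r -> r <= t -> f r < p.
  move=> r ur rt; rewrite ltNge; apply/negP => pr.
  have : r <= u.
    apply: (ub_le_sup hub); split => //; rewrite rt andbT; apply: le_trans su (ltW ur).
  lra.
have ut' : u < t.
  rewrite lt_neqAle ut andbT; apply/negP => /eqP eut.
  by move: ftp; rewrite -eut ltNge pu.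
have [d d0 H] := cont_ball cf u0 rho0.
pose b := Num.min t (u + d / 2).
have ub : u < b by rewrite /b lt_min ut' /=; lra.
have bt : b <= t by rewrite /b ge_min lexx.
have bud : b <= u + d / 2 by rewrite /b ge_min lexx orbT.
have hder : forall x, x \in `]u, b[ -> is_derive x 1 f (derive1 f x).
  move=> x; rewrite in_itv /= => /andP[ux _].
  rewrite derive1E; apply: derivableP; apply: df; lra.
have hcont : {within `[u, b], continuous f}.
  apply: (continuous_subspaceW _ cf) => x /=; rewrite !in_itv /= => /andP[ux _].
  rewrite andbT; lra.
have [c] := MVT ub hder hcont.
rewrite in_itv /= => /andP[uc cb] eq.
have fcp : f c < p by apply: after => //; lra.
have c0 : 0 <= c by lra.
have hd : `|u - c| < d by rewrite ler0_norm ?subr_le0; lra.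
have := H c c0 hd.
rewrite ltr_norml => /andP[h1 h2].
have c0' : 0 < c by lra.
have hr : `|f c - p| < rho by rewrite ler0_norm ?subr_le0; lra.
have dc := dpos c c0' hr.
have : 0 < f b - f u by rewrite eq mulr_gt0 // subr_gt0.
have := after b ub bt. lra.
Qed.

Lemma ereal_range (R : realType) (f : R -> R) (D : R) :
  (forall s t, 0 <= s -> 0 <= t -> f t <= f s + D) -> D < 2 * pi ->
  (ereal_sup (trajE f) - ereal_inf (trajE f) < (2 * pi)%:E)%E.
Proof.
move=> H D2.
have T0 : trajE f (f 0)%:E by exists 0 => //=; rewrite in_itv /= lexx.
have ubs : forall t, 0 <= t -> (ereal_sup (trajE f) <= (f t + D)%:E)%E.
  move=> t t0; apply: ge_ereal_sup => _ [s s0 <-]; rewrite lee_fin.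
  by apply: H => //; move: s0; rewrite /= in_itv /= andbT.
have lbs := ereal_sup_ubound T0.
case E: (ereal_sup (trajE f)) => [r| |] //; last 2 first.
- by have := ubs 0 (lexx 0); rewrite E.
- by move: lbs; rewrite E.
have lbi : ((r - D)%:E <= ereal_inf (trajE f))%E.
  apply: le_ereal_inf_tmp => _ [t t0 <-]; rewrite lee_fin.
  move: t0; rewrite /= in_itv /= andbT => t0.
  have := ubs t t0; rewrite E lee_fin; lra.
have iub : (ereal_inf (trajE f) <= (f 0)%:E)%E by apply: ereal_inf_lbound.
case F: (ereal_inf (trajE f)) lbi iub => [r'| |] //.
rewrite !lee_fin => h1 h2.
rewrite -EFinB lte_fin; lra.
Qed.

Lemma per_nat (R : realType) (g : R -> R) : (forall x, g (x + 2 * pi) = g x) ->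
  forall (n : nat) x, g (x + n%:R * (2 * pi)) = g x.
Proof.
move=> hg; elim=> [|n IH] x; first by rewrite mul0r addr0.
by rewrite -addn1 natrD mulrDl mul1r addrA hg IH.
Qed.

Lemma per_int (R : realType) (g : R -> R) : (forall x, g (x + 2 * pi) = g x) ->
  forall (k : int) x, g (x + k%:~R * (2 * pi)) = g x.
Proof.
move=> hg [n|n] x; first exact: per_nat.
rewrite NegzE mulrNz mulNr.
by rewrite -[in RHS](subrK (n.+1%:R * (2 * pi)) x) per_nat.
Qed.

Lemma gap (R : realType) (Z : R -> Prop) (a eta : R) :
  (forall (k : int) y, Z y -> Z (y + k%:~R * (2 * pi))) ->
  Z a -> Z (a - eta) -> 0 < eta -> eta <= pi ->
  forall x, exists z, [/\ Z z, x < z & z < x + 2 * pi - eta / 2].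
Proof.
move=> hZ Za Zae e0 epi x.
have pi0 : 0 < pi :> R := pi_gt0 R.
have p2 : 0 < 2 * pi :> R by rewrite mulr_gt0.
pose y := (x - a) / (2 * pi).
pose k := (Num.floor y + 1)%R.
have [h1 h2] : y < k%:~R /\ k%:~R <= y + 1.
  have := floor_itv y; rewrite /k rmorphD /= => /andP[f1 f2]; split => //; lra.
have h1' : x - a < k%:~R * (2 * pi) by rewrite -ltr_pdivrMr.
have h2' : k%:~R * (2 * pi) <= x - a + 2 * pi.
  have : k%:~R - 1 <= y by lra.
  rewrite ler_pdivlMr // => h; lra.
have Za' := hZ k a Za.
have Zae' := hZ k _ Zae.
case: (ltP (a + k%:~R * (2 * pi)) (x + 2 * pi - eta / 2)) => hc.
  by exists (a + k%:~R * (2 * pi)); split => //; lra.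
exists (a - eta + k%:~R * (2 * pi)); split => //; lra.
Qed.

Lemma vel_pos (R : realType) (N : nat) (I S : R -> R) (th : 'I_N -> R) (i : 'I_N)
  (w kappa : R) :
  (forall x, 0 <= I x) -> 0 < kappa ->
  N%:R * `|w| / kappa < I (th i) * S (th i) ->
  0 < w + kappa / N%:R * \sum_(j < N) I (th j) * S (th i).
Proof.
move=> I0 k0 hc.
have N0 : (0 < N%:R :> R) by rewrite ltr0n; apply: leq_ltn_trans (ltn_ord i).
have c0 : 0 <= N%:R * `|w| / kappa by apply: divr_ge0; [apply: mulr_ge0 | apply: ltW].
have S0 : 0 < S (th i).
  rewrite ltNge; apply/negP => hS.
  have : I (th i) * S (th i) <= 0 by rewrite mulr_ge0_le0.
  lra.
have hsum : I (th i) * S (th i) <= \sum_(j < N) I (th j) * S (th i).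
  rewrite (bigD1 i) //= lerDl; apply: sumr_ge0 => j _; apply: mulr_ge0 => //; exact: ltW.
have e : kappa / N%:R * (N%:R * `|w| / kappa) = `|w|.
  by field; rewrite gt_eqF //= gt_eqF.
have kN : 0 < kappa / N%:R by rewrite divr_gt0.
have : kappa / N%:R * (N%:R * `|w| / kappa) < kappa / N%:R * \sum_(j < N) I (th j) * S (th i).
  by rewrite ltr_pM2l //; lra.
rewrite e => h.
have : - w <= `|w| by rewrite -normrN ler_norm.
lra.
Qed.

Lemma vel_neg (R : realType) (N : nat) (I S : R -> R) (th : 'I_N -> R) (i : 'I_N)
  (w kappa : R) :
  (forall x, 0 <= I x) -> 0 < kappa ->
  I (th i) * S (th i) < - (N%:R * `|w| / kappa) ->
  w + kappa / N%:R * \sum_(j < N) I (th j) * S (th i) < 0.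
Proof.
move=> I0 k0 hc.
have N0 : (0 < N%:R :> R) by rewrite ltr0n; apply: leq_ltn_trans (ltn_ord i).
have c0 : 0 <= N%:R * `|w| / kappa by apply: divr_ge0; [apply: mulr_ge0 | apply: ltW].
have S0 : S (th i) < 0.
  rewrite ltNge; apply/negP => hS.
  have : 0 <= I (th i) * S (th i) by rewrite mulr_ge0.
  lra.
have hsum : \sum_(j < N) I (th j) * S (th i) <= I (th i) * S (th i).
  rewrite (bigD1 i) //= gerDl; apply: sumr_le0 => j _; apply: mulr_ge0_le0 => //; exact: ltW.
have e : kappa / N%:R * (N%:R * `|w| / kappa) = `|w|.
  by field; rewrite gt_eqF //= gt_eqF.
have kN : 0 < kappa / N%:R by rewrite divr_gt0.
have : kappa / N%:R * \sum_(j < N) I (th j) * S (th i) < kappa / N%:R * (- (N%:R * `|w| / kappa)).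
  by rewrite ltr_pM2l //; lra.
rewrite mulrN e => h.
have : w <= `|w| by rewrite ler_norm.
lra.
Qed.

Unset Implicit Arguments. Set Strict Implicit. Set Printing Implicit Defensive.

Theorem proposition4p1 (R : realType) (I S : R -> R) (N : nat)
  (omega : 'I_N -> R) (kappa : R) (theta0 : 'I_N -> R)
  (theta : 'I_N -> R -> R) (B : {set 'I_N}) :
  periodic2pi I -> periodic2pi S -> lipschitz I -> lipschitz S ->
  (forall x, 0 <= I x) ->
  minIS I S < 0 -> 0 < maxIS I S ->
  (* theta solves the ODE on [0, +oo) with theta(0) = theta0 *)
  (forall i, theta i 0 = theta0 i) ->
  (forall i, {within `[0, +oo[, continuous (theta i)}) ->
  (forall i t, 0 < t -> derivable (theta i) t 1 /\
     derive1 (theta i) t = omega i +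
        kappa / N%:R * \sum_(j < N) I (theta j t) * S (theta i t)) ->
  kappa > N%:R * normOmegaB omega B / Num.min (- minIS I S) (maxIS I S) ->
  forall i, i \in B ->
    (ereal_sup (trajE (theta i)) - ereal_inf (trajE (theta i))
       < (2 * pi)%:E)%E.
Proof.
move=> perI perS lipI lipS I0 minneg maxpos th0 cth dth hk i iB.
have perg : forall x, (fun x => I x * S x) (x + 2 * pi) = (fun x => I x * S x) x.
  by move=> x /=; rewrite perI perS.
have hw : `|omega i| <= normOmegaB omega B.
  by rewrite /normOmegaB (bigD1 i) //= le_max lexx.
have N0 : (0 < N%:R :> R) by rewrite ltr0n; apply: leq_ltn_trans (ltn_ord i).
set mm := Num.min (- minIS I S) (maxIS I S) in hk.
have mm0 : 0 < mm by rewrite /mm lt_min oppr_gt0 minneg maxpos.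
have nB0 : 0 <= normOmegaB omega B := le_trans (normr_ge0 _) hw.
have k0 : 0 < kappa.
  apply: le_lt_trans hk; apply: divr_ge0; [apply: mulr_ge0 => //; exact: ltW | exact: ltW].
pose c := N%:R * `|omega i| / kappa.
have cmm : c < mm.
  rewrite /c ltr_pdivrMr //.
  move: hk; rewrite ltr_pdivrMr // => h.
  have : N%:R * `|omega i| <= N%:R * normOmegaB omega B by rewrite ler_wpM2l // ltW.
  rewrite [mm * kappa]mulrC; lra.
have c0 : 0 <= c by apply: divr_ge0; [apply: mulr_ge0 => //; exact: ltW | exact: ltW].
have cmax : c < maxIS I S.
  apply: lt_le_trans cmm _; rewrite /mm ge_min lexx orbT //.
have cmin : minIS I S < - c.
  have : mm <= - minIS I S by rewrite /mm ge_min lexx.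
  lra.
have ne : [set I x * S x | x in `[- pi, pi]] !=set0.
  exists (I 0 * S 0); exists 0 => //=; rewrite in_itv /=; apply/andP; split; [rewrite oppr_le0|]; exact: ltW (pi_gt0 R).
have [_ [x1 _ <-] hx1] := sup_gt ne cmax.
have [_ [x2 _ <-] hx2] := inf_lt ne cmin.
have gc : continuous (fun x => I x * S x).
  have cI := lip_cont lipI; have cS := lip_cont lipS.
  move=> x; apply: (@continuousM _ _ I S x); [exact: cI | exact: cS].
have gcN : continuous (fun x => - (I x * S x)).
  move=> x; have := gc x; move=> h; exact: (cvgN h).
have [r1 r10 H1] := near_pos gc hx1.
have hx2' : c < - (I x2 * S x2) by lra.
have [r2 r20 H2] := near_pos gcN hx2'.
pose P z := forall y, `|y - z| < r1 / 2 -> c < I y * S y.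
pose Q z := forall y, `|y - z| < r2 / 2 -> I y * S y < - c.
have shift : forall (k : int) (y : R), I (y - k%:~R * (2 * pi)) * S (y - k%:~R * (2 * pi)) = I y * S y.
  move=> k y; have h := per_int perg k (y - k%:~R * (2 * pi)); rewrite /= subrK in h; by rewrite h.
have nshift : forall (k : int) (y z : R), y - k%:~R * (2 * pi) - z = y - (z + k%:~R * (2 * pi)).
  by move=> k y z; rewrite opprD addrA addrAC.
have Pper : forall (k : int) z, P z -> P (z + k%:~R * (2 * pi)).
  move=> k z Pz y hy; rewrite -(shift k y); apply: Pz; by rewrite nshift.
have Qper : forall (k : int) z, Q z -> Q (z + k%:~R * (2 * pi)).
  move=> k z Qz y hy; rewrite -(shift k y); apply: Qz; by rewrite nshift.
have pi0 : 0 < pi :> R := pi_gt0 R.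
pose eta1 := Num.min (r1 / 2) pi.
pose eta2 := Num.min (r2 / 2) pi.
have e1 : 0 < eta1 by rewrite /eta1 lt_min pi0 andbT divr_gt0.
have e2 : 0 < eta2 by rewrite /eta2 lt_min pi0 andbT divr_gt0.
have e1p : eta1 <= pi by rewrite /eta1 ge_min lexx orbT.
have e2p : eta2 <= pi by rewrite /eta2 ge_min lexx orbT.
have e1r : eta1 <= r1 / 2 by rewrite /eta1 ge_min lexx.
have e2r : eta2 <= r2 / 2 by rewrite /eta2 ge_min lexx.
have Px1 : P x1.
  move=> y hy; apply: H1; move: hy; rewrite distrC !ltr_norml => /andP[h1 h2]; apply/andP; split; lra.
have Px1' : P (x1 - eta1).
  move=> y hy; apply: H1; move: hy; rewrite !ltr_norml => /andP[h1 h2]; apply/andP; split; lra.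
have Qx2 : Q x2.
  move=> y hy; have := H2 y; rewrite /= => h; suff hh : c < - (I y * S y) by lra.
  apply: h; move: hy; rewrite distrC !ltr_norml => /andP[h1 h2]; apply/andP; split; lra.
have Qx2' : Q (x2 - eta2).
  move=> y hy; have := H2 y; rewrite /= => h; suff hh : c < - (I y * S y) by lra.
  apply: h; move: hy; rewrite !ltr_norml => /andP[h1 h2]; apply/andP; split; lra.
have gapP := gap Pper Px1 Px1' e1 e1p.
have gapQ := gap Qper Qx2 Qx2' e2 e2p.
have bup : forall z s t, P z -> 0 <= s -> s <= t -> z <= theta i s -> z <= theta i t.
  move=> z s t Pz; apply: (barrier_up (rho := r1 / 2)) => //.
  - by rewrite divr_gt0.
  - by move=> r r0; case: (dth i r r0).
  - move=> r r0 hr; case: (dth i r r0) => _ ->.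
    apply: (vel_pos (th := fun j => theta j r)) => //; exact: Pz.
have bdown : forall z s t, Q z -> 0 <= s -> s <= t -> theta i s <= z -> theta i t <= z.
  move=> z s t Qz; apply: (barrier_down (rho := r2 / 2)) => //.
  - by rewrite divr_gt0.
  - by move=> r r0; case: (dth i r r0).
  - move=> r r0 hr; case: (dth i r r0) => _ ->.
    apply: (vel_neg (th := fun j => theta j r)) => //; exact: Qz.
pose D := 2 * pi - Num.min eta1 eta2 / 2.
have em : 0 < Num.min eta1 eta2 by rewrite lt_min e1 e2.
have em1 : Num.min eta1 eta2 <= eta1 by rewrite ge_min lexx.
have em2 : Num.min eta1 eta2 <= eta2 by rewrite ge_min lexx orbT.
apply: (@ereal_range _ _ D); last by rewrite /D; lra.
move=> s t s0 t0; rewrite leNgt; apply/negP => hlt.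
case: (leP s t) => st.
- have [z [Qz h1 h2]] := gapQ (theta i s).
  have := bdown z s t Qz s0 st (ltW h1).
  rewrite /D in hlt; lra.
- have [z [Pz h1 h2]] := gapP (theta i s).
  have zt : z <= theta i t by rewrite /D in hlt; lra.
  have := bup z t s Pz t0 (ltW st) zt.
  lra.
Qed.
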